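(* Let $k$ be a field of prime characteristic $p$ and let $H_1=\{x_1^p\}^S$ be the $T$-space of $k_0\langle X\rangle$ generated by $x_1^p$. Then for any $u\in H_1$ and any $v\in k_0\langle X\rangle$, $[u,v]=uv-vu\in H_1$.
   Context: $X=\{x_1,x_2,\ldots\}$ is countably infinite; $k_0\langle X\rangle$ is the free associative (non-unital) $k$-algebra on $X$. A $T$-space is a $k$-subspace of $k_0\langle X\rangle$ invariant under every algebra endomorphism of $k_0\langle X\rangle$; $\{f\}^S$ is the $T$-space generated by $f$. *)

(* Defs.v *)
From HB Require Import structures.
From mathcomp Require Import all_boot all_order all_algebra.
Set Implicit Arguments. Unset Strict Implicit. Unset Printing Implicit Defensive.
Import GRing.Theory.
Local Open Scope ring_scope.

(* The free non-unital associative algebra k_0<X> on X = {x_1, x_2, ...}.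
   Variable x_(i+1) is encoded by the natural number i; monomials are words
   (seq nat); an element is a finitely supported function words -> k that
   vanishes on the empty word (no constant term: non-unital). *)
Definition ncpoly (k : fieldType) := seq nat -> k.

Section NC.
Variable k : fieldType.

Definition is_ncp (f : ncpoly k) : Prop :=
  f [::] = 0 /\ exists s : seq (seq nat), forall w, f w != 0 -> w \in s.

Definition nc_zero : ncpoly k := fun _ => 0.
Definition nc_add (f g : ncpoly k) : ncpoly k := fun w => f w + g w.
Definition nc_scale (c : k) (f : ncpoly k) : ncpoly k := fun w => c * f w.
Definition nc_sub (f g : ncpoly k) : ncpoly k := fun w => f w - g w.
Definition nc_mul (f g : ncpoly k) : ncpoly k :=
  fun w => \sum_(i < (size w).+1) f (take i w) * g (drop i w).
Definition nc_var (i : nat) : ncpoly k := fun w => if w == [:: i] then 1 else 0.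
(* f^n for n >= 1 : f * f * ... * f (n factors) *)
Definition nc_pow (f : ncpoly k) (n : nat) : ncpoly k := iter n.-1 (nc_mul f) f.

Definition is_endo (phi : ncpoly k -> ncpoly k) : Prop :=
  [/\ forall f, is_ncp f -> is_ncp (phi f),
      forall f g, is_ncp f -> is_ncp g -> phi (nc_add f g) = nc_add (phi f) (phi g),
      forall c f, is_ncp f -> phi (nc_scale c f) = nc_scale c (phi f)
    & forall f g, is_ncp f -> is_ncp g -> phi (nc_mul f g) = nc_mul (phi f) (phi g)].

Definition is_Tspace (V : ncpoly k -> Prop) : Prop :=
  [/\ forall f, V f -> is_ncp f,
      V nc_zero,
      forall f g, V f -> V g -> V (nc_add f g),
      forall c f, V f -> V (nc_scale c f)
    & forall phi f, is_endo phi -> V f -> V (phi f)].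

Definition Tspace_gen (f : ncpoly k) : ncpoly k -> Prop :=
  fun g => forall V, is_Tspace V -> V f -> V g.

End NC.

(* Main.v *)
From HB Require Import structures.
Require Import Defs.
From mathcomp Require Import all_boot all_order all_algebra.
From mathcomp Require Import boolp.
From Stdlib Require Import ClassicalEpsilon.
From mathcomp Require Import ring.
Set Implicit Arguments. Unset Strict Implicit. Unset Printing Implicit Defensive.
Import GRing.Theory.
Local Open Scope ring_scope.

Section Ring.
Variable k : fieldType.
Implicit Types f g h : ncpoly k.

Lemma nc_mulE f g w :
  nc_mul f g w = \sum_(0 <= i < (size w).+1) f (take i w) * g (drop i w).
Proof. by rewrite big_mkord. Qed.

Lemma nc_mulA : associative (@nc_mul k).
Proof.
move=> f g h; apply/funext => w; symmetry; rewrite !nc_mulE.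
set n := size w.
pose T j i := f (take j w) * g (take (i - j) (drop j w)) * h (drop i w).
transitivity (\sum_(0 <= i < n.+1) \sum_(0 <= j < n.+1) (if (j <= i)%N then T j i else 0)).
  rewrite [LHS]big_nat_cond [RHS]big_nat_cond; apply: eq_bigr => i /andP[/andP[_ Hi] _].
  rewrite nc_mulE size_take.
    have -> : (if (i < size w)%N then i else size w) = i.
    by case: ltnP => // H; apply/eqP; rewrite eqn_leq H -ltnS.
  rewrite big_distrl /= [RHS](big_cat_nat (n := i.+1)) //= [X in _ = _ + X]big1_seq ?addr0.
    rewrite big_nat_cond [RHS]big_nat_cond; apply: eq_bigr => j /andP[/andP[_ Hj] _].
    have Hj' : (j <= i)%N by []. rewrite Hj' /T take_takel // take_drop subnK // mulrA.
  by move=> j /andP[_]; rewrite mem_index_iota => /andP[Hj _]; rewrite leqNgt Hj.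
rewrite exchange_big_nat big_nat_cond [RHS]big_nat_cond.
apply: eq_bigr => j /andP[/andP[_ Hj] _].
rewrite (big_cat_nat (n := j)) //=; last exact: ltnW.
rewrite [X in X + _]big1_seq ?add0r; last first.
  by move=> i /andP[_]; rewrite mem_index_iota => /andP[_ Hi]; rewrite leqNgt Hi.
rewrite nc_mulE big_distrr /= size_drop -{1}(add0n j) big_addn.
have -> : (n.+1 - j = (size w - j).+1)%N by rewrite subSn.
apply: eq_bigr => i _.
by rewrite leq_addl /T addnK drop_drop mulrA.
Qed.

Definition nc_one : ncpoly k := fun w => if w == [::] then 1 else 0.
Definition nc_opp f : ncpoly k := fun w => - f w.

Lemma nc_addA : associative (@nc_add k).
Proof. by move=> f g h; apply/funext => w; rewrite /nc_add addrA. Qed.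
Lemma nc_addC : commutative (@nc_add k).
Proof. by move=> f g; apply/funext => w; rewrite /nc_add addrC. Qed.
Lemma nc_add0 : left_id (@nc_zero k) (@nc_add k).
Proof. by move=> f; apply/funext => w; rewrite /nc_add /nc_zero add0r. Qed.
Lemma nc_addN : left_inverse (@nc_zero k) nc_opp (@nc_add k).
Proof. by move=> f; apply/funext => w; rewrite /nc_add /nc_zero /nc_opp addNr. Qed.

Lemma nc_mul1 : left_id nc_one (@nc_mul k).
Proof.
move=> f; apply/funext => w; rewrite /nc_mul big_ord_recl /= /nc_one /= take0 drop0 mul1r.
rewrite big1 ?addr0 // => i _; rewrite /bump /= add1n.
by case: w i => [[]//|a w i] /=; rewrite mul0r.
Qed.

Lemma nc_mulr1 : right_id nc_one (@nc_mul k).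
Proof.
move=> f; apply/funext => w; rewrite /nc_mul big_ord_recr /= /nc_one /= take_size drop_size mulr1.
rewrite big1 ?add0r // => i _.
have : (0 < size (drop i w))%N by rewrite size_drop subn_gt0.
by case: (drop i w) => //= a l _; rewrite mulr0.
Qed.

Lemma nc_mulDl : left_distributive (@nc_mul k) (@nc_add k).
Proof.
by move=> f g h; apply/funext => w; rewrite /nc_mul /nc_add -big_split; apply: eq_bigr => i _; rewrite mulrDl.
Qed.
Lemma nc_mulDr : right_distributive (@nc_mul k) (@nc_add k).
Proof.
by move=> f g h; apply/funext => w; rewrite /nc_mul /nc_add -big_split; apply: eq_bigr => i _; rewrite mulrDr.
Qed.
Lemma nc_one_neq0 : nc_one != nc_zero k.
Proof.
apply/eqP => /(congr1 (fun F => F [::])); rewrite /nc_one /nc_zero /= => /eqP.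
by rewrite oner_eq0.
Qed.
End Ring.

HB.instance Definition _ (k : fieldType) := Choice.copy (ncpoly k) (seq nat -> k).
HB.instance Definition _ (k : fieldType) := GRing.isNzRing.Build (ncpoly k)
  (@nc_addA k) (@nc_addC k) (@nc_add0 k) (@nc_addN k) (@nc_mulA k)
  (@nc_mul1 k) (@nc_mulr1 k) (@nc_mulDl k) (@nc_mulDr k) (@nc_one_neq0 k).


Section Main.
Variable k : fieldType.
Implicit Types f g h : ncpoly k.

Lemma ncaddE f g w : (f + g) w = f w + g w. Proof. by []. Qed.
Lemma ncoppE f w : (- f) w = - f w. Proof. by []. Qed.
Lemma nczeroE w : (0 : ncpoly k) w = 0. Proof. by []. Qed.
Lemma ncmulE f g w : (f * g) w = nc_mul f g w. Proof. by []. Qed.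
Lemma ncsubE f g : nc_sub f g = f - g. Proof. by []. Qed.

Definition sc (c : k) : ncpoly k := fun w => if w == [::] then c else 0.

Lemma sc_mull c f : sc c * f = nc_scale c f.
Proof.
apply/funext => w; change (nc_mul (sc c) f w = nc_scale c f w).
rewrite /nc_mul big_ord_recl /= /sc /= take0 drop0.
rewrite big1 ?addr0 // => i _; rewrite /bump /= add1n.
by case: w i => [[]//|a w i] /=; rewrite mul0r.
Qed.

Lemma sc_mulr c f : f * sc c = nc_scale c f.
Proof.
apply/funext => w; change (nc_mul f (sc c) w = nc_scale c f w).
rewrite /nc_mul big_ord_recr /= /sc /= take_size drop_size /nc_scale mulrC.
rewrite big1 ?add0r // => i _.
have : (0 < size (drop i w))%N by rewrite size_drop subn_gt0.
by case: (drop i w) => //= a l _; rewrite mulr0.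
Qed.

Lemma sc_comm c f : sc c * f = f * sc c.
Proof. by rewrite sc_mull sc_mulr. Qed.

Lemma sc_is_zmod : zmod_morphism sc.
Proof.
move=> a b; apply/funext => w; change (sc (a - b) w = sc a w - sc b w).
by rewrite /sc; case: (w == [::]) => //; rewrite subr0.
Qed.
Lemma sc_is_monoid : monoid_morphism sc.
Proof.
split => // a b; rewrite sc_mull; apply/funext => w; rewrite /sc /nc_scale.
by case: (w == [::]); rewrite ?mulr0.
Qed.
HB.instance Definition _ := GRing.isZmodMorphism.Build k (ncpoly k) sc sc_is_zmod.
HB.instance Definition _ := GRing.isMonoidMorphism.Build k (ncpoly k) sc sc_is_monoid.

Lemma ncp0 : is_ncp (0 : ncpoly k).
Proof. by split => //; exists [::] => w; rewrite eqxx. Qed.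

Lemma ncpD f g : is_ncp f -> is_ncp g -> is_ncp (f + g).
Proof.
move=> [f0 [s1 H1]] [g0 [s2 H2]]; split; first by rewrite ncaddE f0 g0 addr0.
exists (s1 ++ s2) => w; rewrite ncaddE mem_cat.
have [/eqP Hf|Hf] := eqVneq (f w) 0; last by rewrite H1.
by rewrite (eqP Hf) add0r => /H2 ->; rewrite orbT.
Qed.

Lemma ncp_scale c f : is_ncp f -> is_ncp (nc_scale c f).
Proof.
move=> [f0 [s1 H1]]; split; first by rewrite /nc_scale f0 mulr0.
by exists s1 => w; rewrite /nc_scale => H; apply: H1; apply: contraNneq H => ->; rewrite mulr0.
Qed.

Lemma ncpN f : is_ncp f -> is_ncp (- f).
Proof.
have -> : - f = nc_scale (-1) f by apply/funext => w; rewrite /nc_scale ncoppE mulN1r.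
exact: ncp_scale.
Qed.

Lemma ncpB f g : is_ncp f -> is_ncp g -> is_ncp (f - g).
Proof. by move=> Hf Hg; apply: ncpD => //; apply: ncpN. Qed.

Lemma ncpM f g : is_ncp f -> is_ncp g -> is_ncp (f * g).
Proof.
move=> [f0 [s1 H1]] [g0 [s2 H2]]; split.
  by rewrite ncmulE /nc_mul big_ord_recl big_ord0 addr0 /= f0 mul0r.
exists [seq u ++ v | u <- s1, v <- s2] => w; rewrite ncmulE /nc_mul => H.
have [i _ Hi] : exists2 i : 'I_(size w).+1, true & f (take i w) * g (drop i w) != 0.
  apply/exists_inP; apply: contraNT H => /exists_inPn Hn; apply/eqP.
  by apply: big1 => i _; apply/eqP/negbNE/Hn.
rewrite -(cat_take_drop i w); apply: allpairs_f.
  by apply: H1; apply: contraNneq Hi => ->; rewrite mul0r.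
by apply: H2; apply: contraNneq Hi => ->; rewrite mulr0.
Qed.

Lemma ncpX f n : is_ncp f -> is_ncp (f ^+ n.+1).
Proof. by move=> Hf; elim: n => [|n IH]; rewrite ?expr1 // exprS; apply: ncpM. Qed.

Lemma ncp_sum (I : Type) (r : seq I) (F : I -> ncpoly k) :
  (forall i, is_ncp (F i)) -> is_ncp (\sum_(i <- r) F i).
Proof. by move=> H; elim/big_ind: _ => //; [exact: ncp0 | exact: ncpD]. Qed.

Lemma ncp_var i : is_ncp (nc_var k i).
Proof.
split => //; exists [:: [:: i]] => w; rewrite /nc_var.
by case: (w =P [:: i]) => [->|_]; rewrite ?inE ?eqxx.
Qed.

Lemma nc_powE f n : nc_pow f n.+1 = f ^+ n.+1.
Proof. by elim: n => [|n IH]; [rewrite expr1 | rewrite exprS -IH]. Qed.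

Definition Nf f : nat :=
  epsilon (inhabits 0%N) (fun N => forall n, (N <= n)%N -> f (nseq n 0%N) = 0).
Definition Pf f : {poly k} := \poly_(n < Nf f) f (nseq n 0%N).
Definition phi h f : ncpoly k := (map_poly sc (Pf f)).[h].

Lemma ncp_bound f : is_ncp f -> exists N, forall n, (N <= n)%N -> f (nseq n 0%N) = 0.
Proof.
move=> [_ [s H]]; exists (\max_(w <- s) size w).+1 => n Hn; apply/eqP.
apply: contraTT Hn => /H Hw; rewrite -ltnNge ltnS.
by have := @leq_bigmax_seq _ s predT size _ Hw isT; rewrite size_nseq.
Qed.

Lemma coefPf f n : is_ncp f -> (Pf f)`_n = f (nseq n 0%N).
Proof.
move=> Hf; rewrite /Pf coef_poly; case: ltnP => // H.
by rewrite (epsilon_spec (inhabits 0%N) _ (ncp_bound Hf) n H).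
Qed.

Lemma Pf_add f g : is_ncp f -> is_ncp g -> Pf (f + g) = Pf f + Pf g.
Proof. by move=> Hf Hg; apply/polyP => n; rewrite coefD !coefPf //; apply: ncpD. Qed.

Lemma Pf_scale c f : is_ncp f -> Pf (nc_scale c f) = c%:P * Pf f.
Proof. by move=> Hf; apply/polyP => n; rewrite coefCM !coefPf //; apply: ncp_scale. Qed.

Lemma Pf_mul f g : is_ncp f -> is_ncp g -> Pf (f * g) = Pf f * Pf g.
Proof.
move=> Hf Hg; apply/polyP => n; rewrite coefM coefPf; last exact: ncpM.
rewrite ncmulE /nc_mul size_nseq; apply: eq_bigr => i _.
by rewrite !coefPf // take_nseq ?drop_nseq // -ltnS.
Qed.

Lemma Pf_var : Pf (nc_var k 0) = 'X.
Proof. apply/polyP => n; rewrite coefX coefPf; last exact: ncp_var. by rewrite /nc_var; case: n => [|[|n]]. Qed.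

Section Phi.
Variable h : ncpoly k.
Hypothesis Hh : is_ncp h.

Lemma comm_map q : comm_poly (map_poly sc q) h.
Proof. by apply: comm_coef_poly => i; rewrite coef_map /= sc_comm. Qed.

Lemma phiM f g : is_ncp f -> is_ncp g -> phi h (f * g) = phi h f * phi h g.
Proof. by move=> Hf Hg; rewrite /phi Pf_mul // rmorphM hornerM_comm //; apply: comm_map. Qed.

Lemma phiD f g : is_ncp f -> is_ncp g -> phi h (f + g) = phi h f + phi h g.
Proof. by move=> Hf Hg; rewrite /phi Pf_add // rmorphD hornerD. Qed.

Lemma phiZ c f : is_ncp f -> phi h (nc_scale c f) = nc_scale c (phi h f).
Proof. by move=> Hf; rewrite /phi Pf_scale // rmorphM /= map_polyC hornerCM sc_mull. Qed.

Lemma phi_ncp f : is_ncp f -> is_ncp (phi h f).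
Proof.
move=> Hf; rewrite /phi horner_coef; apply: ncp_sum => -[[|i] Hi] /=.
  by rewrite coef_map /= coefPf // Hf.1 rmorph0 mul0r; apply: ncp0.
by rewrite coef_map /= sc_mull; apply: ncp_scale; apply: ncpX.
Qed.

Lemma phi_var : phi h (nc_var k 0) = h.
Proof. by rewrite /phi Pf_var map_polyX hornerX. Qed.

Lemma phi_endo : is_endo (phi h).
Proof.
split; [exact: phi_ncp | exact: phiD | exact: phiZ | exact: phiM].
Qed.
End Phi.

Lemma endoX (ph : ncpoly k -> ncpoly k) f n : is_endo ph -> is_ncp f ->
  ph (f ^+ n.+1) = (ph f) ^+ n.+1.
Proof.
move=> [_ _ _ HM] Hf; elim: n => [|n IH]; first by rewrite !expr1.
by rewrite exprS HM ?IH -?exprS //; apply: ncpX.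
Qed.

End Main.


Section Comb.
Variable k : fieldType.

Definition Sd (d j a : nat) : k :=
  \sum_(m < d.+1) ((-1) ^+ (d - m) *+ 'C(d, m)) * ((m + a)%:R) ^+ j.

Lemma Sd_val j : forall d a, (j <= d)%N -> Sd d j a = (j == d)%:R * d`!%:R.
Proof.
elim: j => [|j IH] d a Hjd.
  rewrite /Sd.
  have := exprDn (-1 : k) 1 d; rewrite addNr expr0n => E.
  transitivity ((d == 0%N)%:R : k); last by case: d {Hjd E} => [|d]; rewrite ?mulr1 ?mul0r.
  rewrite E; apply: eq_bigr => i _; by rewrite !expr0 expr1n !mulr1.
case: d Hjd => [//|d] Hjd.
rewrite /Sd.
transitivity (\sum_(m < d.+2) ((-1) ^+ (d.+1 - m) *+ 'C(d.+1, m)) * ((m + a)%:R) ^+ j * m%:R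
   + a%:R * Sd d.+1 j a).
  rewrite /Sd mulr_sumr -big_split; apply: eq_bigr => i _ /=.
  rewrite exprSr natrD; ring.
rewrite (IH d.+1 a (ltnW Hjd)) eqn_leq [(d.+1 <= j)%N]leqNgt Hjd andbF mul0r mulr0 addr0.
rewrite big_ord_recl /= mulr0 add0r.
transitivity (d.+1%:R * Sd d j a.+1); last first.
  rewrite (IH d a.+1 Hjd) eqSS factS natrM; ring.
rewrite /Sd mulr_sumr; apply: eq_bigr => i _ /=.
rewrite /bump /= add1n subSS addSnnS -!(mulr_natr ((-1) ^+ _)).
have H : ('C(d.+1, i.+1) * i.+1 = d.+1 * 'C(d, i))%N by rewrite mulnC -mul_bin_diag.
have Hk := congr1 (fun x => x%:R : k) H; rewrite /= !natrM in Hk.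
transitivity ((-1 : k) ^+ (d - i) * ((i + a.+1)%:R) ^+ j * ('C(d.+1, i.+1)%:R * i.+1%:R)); first ring.
rewrite Hk; ring.
Qed.

Lemma fact_ndvd p n : prime p -> (n < p)%N -> ~~ (p %| n`!)%N.
Proof.
move=> Pp; elim: n => [|n IH] Hn.
  by rewrite fact0 dvdn1; apply/eqP => E; rewrite E in Pp.
rewrite factS Euclid_dvdM // negb_or IH ?andbT; last exact: ltnW.
by apply/negP => /dvdn_leq => /(_ isT); rewrite leqNgt Hn.
Qed.
End Comb.

Section CC.
Variables (R : nzRingType) (f g : R).

Fixpoint cc n j : R :=
  match n with
  | 0 => (j == 0%N)%:R
  | n'.+1 => cc n' j * g + (if j is j'.+1 then cc n' j' * f else 0)
  end.

Lemma cc_gt n j : (n < j)%N -> cc n j = 0.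
Proof.
elim: n j => [|n IH] [|j] //= H.
rewrite IH; last exact: ltnW.
by rewrite IH // !mul0r addr0.
Qed.

Lemma cc_nn n : cc n n = f ^+ n.
Proof. by elim: n => [|n IH] //=; rewrite cc_gt // mul0r add0r IH exprSr. Qed.

Lemma cc_expand m n : (g + f *+ m) ^+ n = \sum_(j < n.+1) cc n j *+ (m ^ j).
Proof.
elim: n => [|n IH]; first by rewrite expr0 big_ord_recl big_ord0 addr0.
rewrite exprSr IH mulrDr !mulr_suml.
rewrite [RHS](eq_bigr (fun j : 'I_n.+2 => cc n j * g *+ m ^ j +
    (if (j : nat) is j'.+1 then cc n j' * f else 0) *+ m ^ j)); last first.
  by move=> j _ /=; rewrite mulrnDl.
rewrite big_split /=; congr (_ + _).
  rewrite [RHS]big_ord_recr /= cc_gt // mul0r mul0rn addr0.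
  by apply: eq_bigr => j _; rewrite mulrnAl.
rewrite [RHS]big_ord_recl /= mul0rn add0r.
by apply: eq_bigr => j _; rewrite mulrnAr mulrnAl -mulrnA /bump /= add1n expnSr.
Qed.

Lemma cc_comm v n : g = f * v - v * f -> cc n.+1 n = f ^+ n.+1 * v - v * f ^+ n.+1.
Proof.
move=> Hg; elim: n => [|n IH]; first by rewrite /= mul1r addr0 expr1.
have -> : cc n.+2 n.+1 = cc n.+1 n.+1 * g + cc n.+1 n * f by [].
rewrite cc_nn IH Hg.
rewrite [f ^+ n.+2]exprSr mulrBr mulrBl !mulrA addrA subrK.
by [].
Qed.
End CC.


Section Final.
Variable k : fieldType.
Variable d : nat.
Implicit Types f g h u v : ncpoly k.

Inductive Sp : ncpoly k -> Prop :=
| Sp0 : Sp 0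
| SpS c f g : is_ncp f -> Sp g -> Sp (nc_scale c (f ^+ d.+1) + g).

Lemma Sp_ncp u : Sp u -> is_ncp u.
Proof.
elim => [|c f g Hf _ Hg]; first exact: ncp0.
by apply: ncpD => //; apply: ncp_scale; apply: ncpX.
Qed.

Lemma endo0 (ph : ncpoly k -> ncpoly k) : is_endo ph -> ph 0 = 0.
Proof.
move=> [_ HD _ _]; apply: (@addrI _ (ph 0)).
have := HD 0 0 (ncp0 k) (ncp0 k); change (ph (0 + 0) = ph 0 + ph 0 -> ph 0 + ph 0 = ph 0 + 0).
by rewrite addr0 => E; rewrite -E addr0.
Qed.

Lemma Sp_T : is_Tspace Sp.
Proof.
split.
- exact: Sp_ncp.
- exact: Sp0.
- move=> f g Hf Hg; change (Sp (f + g)); elim: Hf => [|c f1 g1 Hf1 _ IH]; first by rewrite add0r.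
  by rewrite -addrA; apply: SpS.
- move=> c f; elim => [|c1 f1 g1 Hf1 _ IH].
    have -> : nc_scale c 0 = 0 by apply/funext => w; rewrite /nc_scale nczeroE mulr0.
    exact: Sp0.
  have -> : nc_scale c (nc_scale c1 (f1 ^+ d.+1) + g1) =
            nc_scale (c * c1) (f1 ^+ d.+1) + nc_scale c g1.
    by apply/funext => w; rewrite /nc_scale !ncaddE mulrDr mulrA.
  exact: SpS.
- move=> ph f He; elim => [|c f1 g1 Hf1 Hg1 IH]; first by rewrite endo0 //; apply: Sp0.
  have He' := He; case: He' => [HN HD HZ HM].
  have Hg1' := Sp_ncp Hg1.
  have Hp1 : is_ncp (f1 ^+ d.+1) by apply: ncpX.
  rewrite HD; last by []; last by apply: ncp_scale.
  change (Sp (ph (nc_scale c (f1 ^+ d.+1)) + ph g1)).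
  rewrite HZ // (endoX _ He Hf1).
  by apply: SpS => //; apply: HN.
Qed.

Lemma Sp_gen : Sp (nc_pow (nc_var k 0) d.+1).
Proof.
rewrite nc_powE.
have -> : nc_var k 0 ^+ d.+1 = nc_scale 1 (nc_var k 0 ^+ d.+1) + 0.
  by apply/funext => w; rewrite ncaddE nczeroE /nc_scale mul1r addr0.
by apply: SpS; [apply: ncp_var | apply: Sp0].
Qed.

Section V.
Variable V : ncpoly k -> Prop.
Hypothesis HV : is_Tspace V.
Hypothesis HP : V (nc_pow (nc_var k 0) d.+1).

Lemma V0 : V 0.
Proof. by case: HV. Qed.
Lemma VD f g : V f -> V g -> V (f + g).
Proof. by case: HV => _ _ H _ _; apply: H. Qed.
Lemma VZ c f : V f -> V (sc c * f).
Proof. by case: HV => _ _ _ H _; rewrite sc_mull; apply: H. Qed.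
Lemma Vsum (I : Type) (r : seq I) (F : I -> ncpoly k) :
  (forall i, V (F i)) -> V (\sum_(i <- r) F i).
Proof. by move=> H; elim/big_ind: _ => //; [exact: V0 | exact: VD]. Qed.

Lemma Vpow h : is_ncp h -> V (h ^+ d.+1).
Proof.
move=> Hh; case: HV => _ _ _ _ H.
have := H (phi h) _ (phi_endo Hh) HP.
by rewrite nc_powE endoX ?phi_var //; [apply: phi_endo | apply: ncp_var].
Qed.

Lemma ncpMn f m : is_ncp f -> is_ncp (f *+ m).
Proof. by move=> Hf; elim: m => [|m IH]; [apply: ncp0 | rewrite mulrS; apply: ncpD]. Qed.

Lemma key f g :
  \sum_(m < d.+1) sc ((-1) ^+ (d - m) *+ 'C(d, m)) * (g + f *+ m) ^+ d.+1 =
  sc (d`!%:R) * cc f g d.+1 d + sc (Sd k d d.+1 0) * cc f g d.+1 d.+1.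
Proof.
rewrite (eq_bigr (fun m : 'I_d.+1 => \sum_(j < d.+2)
    sc ((-1) ^+ (d - m) *+ 'C(d, m) * ((m + 0)%:R) ^+ j) * cc f g d.+1 j)); last first.
  move=> m _; rewrite cc_expand mulr_sumr; apply: eq_bigr => j _.
  by rewrite rmorphM rmorphXn rmorph_nat addn0 -natrX -mulrA mulr_natl mulrnAr.
rewrite exchange_big /=.
rewrite (eq_bigr (fun j : 'I_d.+2 => sc (Sd k d j 0) * cc f g d.+1 j)); last first.
  by move=> j _; rewrite -mulr_suml -rmorph_sum.
rewrite big_ord_recr big_ord_recr /= big1 ?add0r.
  by rewrite Sd_val // eqxx mul1r.
move=> j _; rewrite Sd_val; last exact: ltnW.
by rewrite (ltn_eqF (ltn_ord j)) mul0r rmorph0 mul0r.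
Qed.

Lemma Vcomm f v : is_ncp f -> is_ncp v -> (d.+1 \in [pchar k])%N ->
  V (f ^+ d.+1 * v - v * f ^+ d.+1).
Proof.
move=> Hf Hv hp.
set g := f * v - v * f.
have Hg : is_ncp g by apply: ncpB; apply: ncpM.
have HS := key f g.
rewrite cc_nn (cc_comm (v := v)) // in HS.
have H1 : V (sc (d`!%:R) * (f ^+ d.+1 * v - v * f ^+ d.+1)).
  have -> : sc (d`!%:R) * (f ^+ d.+1 * v - v * f ^+ d.+1) =
     \sum_(m < d.+1) sc ((-1) ^+ (d - m) *+ 'C(d, m)) * (g + f *+ m) ^+ d.+1
     + sc (-1) * (sc (Sd k d d.+1 0) * f ^+ d.+1).
    by rewrite HS rmorphN1 mulN1r addrK.
  apply: VD; last by apply: VZ; apply: VZ; apply: Vpow.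
  apply: Vsum => m; apply: VZ; apply: Vpow; apply: ncpD => //; exact: ncpMn.
have Hd : (d`!%:R : k) != 0.
  rewrite -(dvdn_pcharf hp); apply: fact_ndvd => //; exact: pcharf_prime hp.
have := VZ ((d`!%:R)^-1) H1.
by rewrite mulrA -rmorphM mulVf // rmorph1 mul1r.
Qed.
End V.

Lemma main u v : (d.+1 \in [pchar k])%N -> Sp u -> is_ncp v ->
  forall V, is_Tspace V -> V (nc_pow (nc_var k 0) d.+1) -> V (u * v - v * u).
Proof.
move=> hp Hu Hv V HV HP; elim: Hu => [|c f g Hf Hg IH].
  by rewrite mul0r mulr0 subr0; apply: V0.
rewrite -!sc_mull mulrDl mulrDr.
have -> : sc c * f ^+ d.+1 * v + g * v - (v * (sc c * f ^+ d.+1) + v * g) =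
          sc c * (f ^+ d.+1 * v - v * f ^+ d.+1) + (g * v - v * g).
  by rewrite [v * (sc c * _)]mulrA -sc_comm mulrBr !mulrA opprD addrACA.
by apply: VD => //; apply: VZ => //; apply: Vcomm.
Qed.
End Final.

Unset Implicit Arguments.
Theorem corollary4p3 (k : fieldType) (p : nat) (hp : p \in [pchar k])
    (u v : ncpoly k) :
  Tspace_gen (nc_pow (nc_var k 0) p) u -> is_ncp v ->
  Tspace_gen (nc_pow (nc_var k 0) p) (nc_sub (nc_mul u v) (nc_mul v u)).
Proof.
have Pp := pcharf_prime hp.
case: p hp Pp => [//|d] hp Pp Hu Hv V HV HP.
have HSp : Sp d u by apply: Hu; [apply: Sp_T | apply: Sp_gen].
exact: (main hp HSp Hv HV HP).
Qed.
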